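(* Let $n$ be a positive integer and let $P$ be a regular Euclidean $(n+1)$-gon. Consider two intersecting diagonals of $P$, each of length at most $\lfloor n/6\rfloor$. Then the internal angle between them is $>2\pi/3$.
   Context: For a regular polygon $P$, a \emph{diagonal} is a geodesic segment connecting two (possibly consecutive) vertices of $P$. A \emph{segment} of $P$ is the smaller of the two pieces obtained by cutting $P$ along a diagonal (if the diagonal is an edge of $P$, the segment is that edge); the \emph{length} of a segment is the number of edges of $P$ it contains, and the \emph{length} of a diagonal is the length of the segment it subtends. If $P$ is an $N$-gon and $d_1,d_2$ are two diagonals of length less than $N/2$ intersecting at a point $p$ (possibly a common endpoint), exactly one connected component of $P\setminus(d_1\cup d_2)$ contains the centre of $P$; the angle at $p$ between $d_1$ and $d_2$ lying in this component is the \emph{internal angle} between $d_1$ and $d_2$. *)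

(* Defs.v *)
From Stdlib Require Import Reals Lra Lia Arith.
Open Scope R_scope.

Definition pt := (R * R)%type.

Definition vertex (N k : nat) : pt :=
  (cos (2 * PI * INR k / INR N), sin (2 * PI * INR k / INR N)).

Definition centre : pt := (0, 0).

(* Length of the diagonal joining vertices i and j (i, j < N): the number of
   edges of the smaller of the two pieces, i.e. the cyclic distance. *)
Definition diag_length (N i j : nat) : nat :=
  let d := ((j + N - i) mod N)%nat in Nat.min d (N - d).

Definition is_diag (N i j : nat) : Prop := (i < N)%nat /\ (j < N)%nat /\ i <> j.

Definition on_segment (a b p : pt) : Prop :=
  exists l : R, 0 <= l <= 1 /\
    fst p = (1 - l) * fst a + l * fst b /\ snd p = (1 - l) * snd a + l * snd b.

Definition in_open_cone (p a b q : pt) : Prop :=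
  exists s t : R, 0 < s /\ 0 < t /\
    fst q = fst p + s * (fst a - fst p) + t * (fst b - fst p) /\
    snd q = snd p + s * (snd a - snd p) + t * (snd b - snd p).

Definition angle (p a b : pt) : R :=
  let ux := fst a - fst p in let uy := snd a - snd p in
  let vx := fst b - fst p in let vy := snd b - snd p in
  acos ((ux * vx + uy * vy) /
        (sqrt (ux * ux + uy * uy) * sqrt (vx * vx + vy * vy))).

(* theta is the internal angle between the diagonals d1 = [v_i1, v_j1] and
   d2 = [v_i2, v_j2] of the regular N-gon: they meet at p, and theta is the
   angle at p between the piece of d1 from p to one of its endpoints a and the
   piece of d2 from p to one of its endpoints b, the sector between them
   being the one in the component of P \ (d1 u d2) containing the centre
   (equivalently: the centre lies in the open cone spanned at p by a and b). *)
Definition internal_angle (N i1 j1 i2 j2 : nat) (theta : R) : Prop :=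
  exists p a b : pt,
    on_segment (vertex N i1) (vertex N j1) p /\
    on_segment (vertex N i2) (vertex N j2) p /\
    (a = vertex N i1 \/ a = vertex N j1) /\
    (b = vertex N i2 \/ b = vertex N j2) /\
    a <> p /\ b <> p /\
    in_open_cone p a b centre /\
    theta = angle p a b.

(* Main.v *)
Require Import Defs.
From Stdlib Require Import Reals Lra Lia Arith.
Open Scope R_scope.
Lemma keyK (ex ey fx fy l px py : R) :
  ex*ex+ey*ey = 1 -> fx*fx+fy*fy = 1 -> ex*fx+ey*fy > 1/2 -> 0 <= l <= 1 ->
  px = (1-l)*ex + l*fx -> py = (1-l)*ey + l*fy ->
  (ex-px)*(ex-px)+(ey-py)*(ey-py) > 0 ->
  2*((ex-px)*(0-px)+(ey-py)*(0-py)) <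
    sqrt ((ex-px)*(ex-px)+(ey-py)*(ey-py)) * sqrt ((0-px)*(0-px)+(0-py)*(0-py))
  /\ (0-px)*(0-px)+(0-py)*(0-py) > 0.
Proof.
  intros He Hf HC Hl Hpx Hpy Huu.
  set (C := ex*fx+ey*fy) in *.
  set (D := 1 - C).
  assert (Eu : (ex-px)*(ex-px)+(ey-py)*(ey-py) = l*l*(2*D)).
  { transitivity (l*l*(2*D) + l*l*((ex*ex+ey*ey-1)+(fx*fx+fy*fy-1))).
    - unfold D, C; rewrite Hpx, Hpy; ring.
    - rewrite He, Hf; ring. }
  assert (Ew : (ex-px)*(0-px)+(ey-py)*(0-py) = l*(2*l-1)*D).
  { transitivity (l*(2*l-1)*D - l*(1-l)*(ex*ex+ey*ey-1) + l*l*(fx*fx+fy*fy-1)).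
    - unfold D, C; rewrite Hpx, Hpy; ring.
    - rewrite He, Hf; ring. }
  assert (Ep : (0-px)*(0-px)+(0-py)*(0-py) = 1 - 2*l*(1-l)*D).
  { transitivity (1 - 2*l*(1-l)*D + (1-l)*(1-l)*(ex*ex+ey*ey-1) + l*l*(fx*fx+fy*fy-1)).
    - unfold D, C; rewrite Hpx, Hpy; ring.
    - rewrite He, Hf; ring. }
  rewrite Eu, Ew, Ep. rewrite Eu in Huu.
  assert (HD : D < 1/2) by (unfold D; lra).
  assert (HlD : 0 < l*l*D) by lra.
  assert (HD0 : 0 < D).
  { destruct (Rle_lt_dec D 0); [|lra]. assert (0 <= l*l) by nra. assert (0 <= l*l*(-D)) by (apply Rmult_le_pos; lra). lra. }
  assert (Hll : l*(1-l) <= 1/4) by (assert (0 <= (l-1/2)*(l-1/2)) by apply Rle_0_sqr; nra).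
  assert (Hl0 : 0 <= l*(1-l)) by nra.
  assert (0 <= (1/4 - l*(1-l))*D) by (apply Rmult_le_pos; lra).
  assert (0 <= l*(1-l)*(1/2-D)) by (apply Rmult_le_pos; lra).
  assert (Hp : 1 - 2*l*(1-l)*D > 0) by nra.
  split; [|exact Hp].
  destruct (Rle_lt_dec (l*(2*l-1)*D) 0) as [Hneg|Hpos].
  - assert (0 < sqrt (l*l*(2*D)) * sqrt (1 - 2*l*(1-l)*D)).
    { apply Rmult_lt_0_compat; apply sqrt_lt_R0; lra. }
    lra.
  - rewrite <- sqrt_mult by lra.
    rewrite <- (sqrt_square (2*(l*(2*l-1)*D))) by lra.
    apply sqrt_lt_1; nra.
Qed.

Lemma comb (ux uy vx vy wx wy s t : R) : 0 < s -> 0 < t ->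
  wx = s*ux+t*vx -> wy = s*uy+t*vy ->
  ux*ux+uy*uy > 0 -> vx*vx+vy*vy > 0 -> wx*wx+wy*wy > 0 ->
  2*(ux*wx+uy*wy) < sqrt (ux*ux+uy*uy) * sqrt (wx*wx+wy*wy) ->
  2*(vx*wx+vy*wy) < sqrt (vx*vx+vy*vy) * sqrt (wx*wx+wy*wy) ->
  2*(ux*vx+uy*vy) < - (sqrt (ux*ux+uy*uy) * sqrt (vx*vx+vy*vy)).
Proof.
  intros Hs Ht Hwx Hwy Hu Hv Hw H1 H2.
  set (nu := sqrt (ux*ux+uy*uy)) in *.
  set (nv := sqrt (vx*vx+vy*vy)) in *.
  set (nw := sqrt (wx*wx+wy*wy)) in *.
  assert (Hnu : nu*nu = ux*ux+uy*uy) by (apply sqrt_sqrt; lra).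
  assert (Hnv : nv*nv = vx*vx+vy*vy) by (apply sqrt_sqrt; lra).
  assert (Hnw : nw*nw = wx*wx+wy*wy) by (apply sqrt_sqrt; lra).
  assert (Pu : 0 < nu) by (apply sqrt_lt_R0; lra).
  assert (Pv : 0 < nv) by (apply sqrt_lt_R0; lra).
  assert (Pw : 0 < nw) by (apply sqrt_lt_R0; lra).
  set (c := ux*vx+uy*vy).
  assert (Euw : ux*wx+uy*wy = s*(nu*nu) + t*c) by (rewrite Hnu, Hwx, Hwy; unfold c; ring).
  assert (Evw : vx*wx+vy*wy = s*c + t*(nv*nv)) by (rewrite Hnv, Hwx, Hwy; unfold c; ring).
  assert (Eww : nw*nw = s*(ux*wx+uy*wy) + t*(vx*wx+vy*wy)) by (rewrite Hnw, Hwx, Hwy; ring).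
  set (X := s*nu + t*nv).
  assert (E1 : 2*(nw*nw) < X*nw).
  { rewrite Eww. unfold X.
    assert (s*(2*(ux*wx+uy*wy)) < s*(nu*nw)) by (apply Rmult_lt_compat_l; lra).
    assert (t*(2*(vx*wx+vy*wy)) < t*(nv*nw)) by (apply Rmult_lt_compat_l; lra).
    nra. }
  assert (E1' : 2*nw < X) by nra.
  assert (E2 : nv*(2*(ux*wx+uy*wy)) + nu*(2*(vx*wx+vy*wy)) < 2*nu*nv*nw).
  { assert (nv*(2*(ux*wx+uy*wy)) < nv*(nu*nw)) by (apply Rmult_lt_compat_l; lra).
    assert (nu*(2*(vx*wx+vy*wy)) < nu*(nv*nw)) by (apply Rmult_lt_compat_l; lra).
    lra. }
  rewrite Euw, Evw in E2.
  assert (E3 : 2*(nu*nv + c)*X < 2*nu*nv*nw).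
  { unfold X. nra. }
  assert (E4 : 2*nu*nv*nw < nu*nv*X).
  { assert (0 < nu*nv) by nra. nra. }
  assert (HX : 0 < X) by (unfold X; nra).
  assert (E5 : (nu*nv + 2*c)*X < 0) by nra.
  assert (nu*nv + 2*c < 0).
  { destruct (Rle_lt_dec 0 (nu*nv+2*c)); [|lra]. nra. }
  lra.
Qed.

Lemma acos_gt (x : R) : x < -1/2 -> acos x > 2*PI/3.
Proof.
  intros H. assert (HP := PI_RGT_0).
  destruct (Rle_dec x (-1)).
  - unfold acos. destruct (Rle_dec x (-1)); [lra|contradiction].
  - destruct (acos_bound x) as [A B].
    assert (Cx : cos (acos x) = x) by (apply cos_acos; lra).
    replace (2*PI/3) with (2*(PI/3)) by field.
    apply Rlt_gt, (cos_decreasing_0 (acos x) (2*(PI/3))); try lra.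
    rewrite Cx, cos_2PI3. lra.
Qed.
Lemma cos_2PI_minus (y : R) : cos (2*PI - y) = cos y.
Proof. rewrite cos_minus, cos_2PI, sin_2PI. ring. Qed.

Lemma cos_small (n k : nat) : (6 * k <= n)%nat -> cos (2*PI*INR k/INR (S n)) > 1/2.
Proof.
  intros H. assert (HP := PI_RGT_0).
  assert (HN : 0 < INR (S n)) by (apply lt_0_INR; lia).
  assert (Hk : 6 * INR k < INR (S n)).
  { replace 6 with (INR 6) by (simpl; ring). rewrite <- mult_INR. apply lt_INR. lia. }
  assert (Hk0 : 0 <= INR k) by apply pos_INR.
  rewrite <- cos_PI3. apply Rlt_gt.
  assert (H1 : 2*PI*INR k/INR (S n) < PI/3).
  { apply (Rmult_lt_reg_r (INR (S n))); [lra|].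
    unfold Rdiv. rewrite Rmult_assoc, Rinv_l by lra. nra. }
  assert (H0 : 0 <= 2*PI*INR k/INR (S n)).
  { unfold Rdiv. apply Rmult_le_pos; [nra|]. left; apply Rinv_0_lt_compat; lra. }
  apply cos_decreasing_1; lra.
Qed.

Lemma cos_diag (n i j : nat) : (i < S n)%nat -> (j < S n)%nat ->
  (6 * diag_length (S n) i j <= n)%nat ->
  cos (2*PI*INR i/INR (S n)) * cos (2*PI*INR j/INR (S n)) +
  sin (2*PI*INR i/INR (S n)) * sin (2*PI*INR j/INR (S n)) > 1/2.
Proof.
  intros Hi Hj Hd. rewrite <- cos_minus.
  unfold diag_length in Hd.
  set (N := S n) in *.
  assert (HN : 0 < INR N) by (apply lt_0_INR; unfold N; lia).
  set (d := ((j + N - i) mod N)%nat) in *.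
  assert (Hdiv : forall x, 2*PI*INR x/INR N = 2*PI*(INR x/INR N)).
  { intros; unfold Rdiv; ring. }
  assert (HNN : 2*PI*(INR N/INR N) = 2*PI) by (field; lra).
  destruct (Nat.le_gt_cases i j) as [Hij|Hij].
  - assert (Ed : d = (j - i)%nat).
    { unfold d. replace (j + N - i)%nat with ((j - i) + 1 * N)%nat by lia.
      rewrite Nat.Div0.mod_add. apply Nat.mod_small. lia. }
    replace (2*PI*INR i/INR N - 2*PI*INR j/INR N) with (- (2*PI*INR d/INR N)).
    2:{ rewrite Ed, minus_INR by lia. field. lra. }
    rewrite cos_neg.
    destruct (Nat.le_ge_cases d (N - d)) as [H|H].
    + rewrite Nat.min_l in Hd by exact H. apply cos_small; exact Hd.
    + rewrite Nat.min_r in Hd by exact H.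
      replace (2*PI*INR d/INR N) with (2*PI - 2*PI*INR (N-d)/INR N).
      2:{ rewrite minus_INR by (rewrite Ed; lia). field. lra. }
      rewrite cos_2PI_minus. apply cos_small; exact Hd.
  - assert (Ed : d = (j + N - i)%nat).
    { unfold d. apply Nat.mod_small. lia. }
    replace (2*PI*INR i/INR N - 2*PI*INR j/INR N) with (2*PI*INR (N - d)/INR N).
    2:{ rewrite Ed. rewrite minus_INR by lia. rewrite minus_INR by lia.
        rewrite plus_INR. field. lra. }
    destruct (Nat.le_ge_cases d (N - d)) as [H|H].
    + rewrite Nat.min_l in Hd by exact H.
      replace (2*PI*INR (N-d)/INR N) with (2*PI - 2*PI*INR d/INR N).
      2:{ rewrite minus_INR by (rewrite Ed; lia). field. lra. }
      rewrite cos_2PI_minus. apply cos_small; exact Hd.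
    + rewrite Nat.min_r in Hd by exact H. apply cos_small; exact Hd.
Qed.

Lemma neq_pos (a p : pt) : a <> p ->
  (fst a - fst p)*(fst a - fst p) + (snd a - snd p)*(snd a - snd p) > 0.
Proof.
  destruct a as [ax ay], p as [px py]; simpl. intros H.
  destruct (Rlt_dec 0 ((ax-px)*(ax-px)+(ay-py)*(ay-py))) as [h|h]; [lra|].
  exfalso. apply H. apply Rnot_lt_le in h.
  assert (0 <= (ax-px)*(ax-px)) by apply Rle_0_sqr. assert (0 <= (ay-py)*(ay-py)) by apply Rle_0_sqr.
  assert (ax = px) by nra. assert (ay = py) by nra. subst; reflexivity.
Qed.

Lemma chord (e f p a : pt) :
  fst e*fst e + snd e*snd e = 1 -> fst f*fst f + snd f*snd f = 1 ->
  fst e*fst f + snd e*snd f > 1/2 -> on_segment e f p -> (a = e \/ a = f) -> a <> p ->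
  2*((fst a - fst p)*(0 - fst p) + (snd a - snd p)*(0 - snd p)) <
    sqrt ((fst a - fst p)*(fst a - fst p) + (snd a - snd p)*(snd a - snd p)) *
    sqrt ((0 - fst p)*(0 - fst p) + (0 - snd p)*(0 - snd p))
  /\ (0 - fst p)*(0 - fst p) + (0 - snd p)*(0 - snd p) > 0.
Proof.
  intros He Hf HC [l [Hl [Hpx Hpy]]] Ha Hap.
  pose proof (neq_pos _ _ Hap) as Hu.
  destruct e as [ex ey], f as [fx fy], p as [px py]; simpl in *.
  destruct Ha as [Ha|Ha]; subst a; simpl in *.
  - apply (keyK ex ey fx fy l px py); auto.
  - apply (keyK fx fy ex ey (1-l) px py); auto; try lra; try (rewrite Hpx; ring); try (rewrite Hpy; ring).
Qed.

Lemma vnorm (N k : nat) : fst (vertex N k) * fst (vertex N k) + snd (vertex N k) * snd (vertex N k) = 1.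
Proof. unfold vertex; simpl. pose proof (sin2_cos2 (2 * PI * INR k / INR N)). unfold Rsqr in H. lra. Qed.

Theorem lemma3p3 (n : nat) (i1 j1 i2 j2 : nat) (theta : R) :
  (0 < n)%nat ->
  is_diag (S n) i1 j1 -> is_diag (S n) i2 j2 ->
  (diag_length (S n) i1 j1 <= n / 6)%nat ->
  (diag_length (S n) i2 j2 <= n / 6)%nat ->
  internal_angle (S n) i1 j1 i2 j2 theta ->
  theta > 2 * PI / 3.
Proof.
  intros Hn [Hi1 [Hj1 _]] [Hi2 [Hj2 _]] Hd1 Hd2
    [p [a [b [S1 [S2 [Ha [Hb [Hap [Hbp [Hcone Ht]]]]]]]]]].
  pose proof (Nat.Div0.mul_div_le n 6).
  assert (D1 : (6 * diag_length (S n) i1 j1 <= n)%nat) by lia.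
  assert (D2 : (6 * diag_length (S n) i2 j2 <= n)%nat) by lia.
  pose proof (cos_diag n i1 j1 Hi1 Hj1 D1) as C1.
  pose proof (cos_diag n i2 j2 Hi2 Hj2 D2) as C2.
  destruct (chord (vertex (S n) i1) (vertex (S n) j1) p a) as [K1 W]; auto using vnorm.
  destruct (chord (vertex (S n) i2) (vertex (S n) j2) p b) as [K2 _]; auto using vnorm.
  pose proof (neq_pos _ _ Hap) as Pu.
  pose proof (neq_pos _ _ Hbp) as Pv.
  destruct Hcone as [s [t [Hs [Htt [Hx Hy]]]]].
  unfold centre in Hx, Hy; simpl in Hx, Hy.
  pose proof (comb (fst a - fst p) (snd a - snd p) (fst b - fst p) (snd b - snd p)
     (0 - fst p) (0 - snd p) s t Hs Htt ltac:(lra) ltac:(lra) Pu Pv W K1 K2) as M.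
  rewrite Ht. unfold angle. apply acos_gt.
  set (nu := sqrt ((fst a - fst p) * (fst a - fst p) + (snd a - snd p) * (snd a - snd p))) in *.
  set (nv := sqrt ((fst b - fst p) * (fst b - fst p) + (snd b - snd p) * (snd b - snd p))) in *.
  assert (0 < nu) by (apply sqrt_lt_R0; lra).
  assert (0 < nv) by (apply sqrt_lt_R0; lra).
  assert (0 < nu*nv) by nra.
  apply (Rmult_lt_reg_r (nu*nv)); [lra|].
  unfold Rdiv. rewrite Rmult_assoc, Rinv_l by lra. lra.
Qed.
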